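(* Let $(G,\cdot)$ be a group, $\epsilon\in\{1,-1\}$, and $\psi_1,\psi_2\in\operatorname{End}(G,\cdot)$. Suppose either $\epsilon=-1$ and both $\psi_i$ satisfy $\psi_i([[G,\psi_i],G])\le Z(G,\cdot)$, or $\epsilon=1$ and both $\psi_i$ satisfy $\psi_i([\psi_i(G),G])\le Z(G,\cdot)$. For $i=1,2$ let $N_i=\{h\mapsto g\cdot\psi_i(g)^{\epsilon}\cdot h\cdot\psi_i(g)^{-\epsilon} : g\in G\}\subseteq\operatorname{Perm}(G)$ (a regular subgroup under these hypotheses). Then $N_1=N_2$ if and only if $\psi_1(g)\cdot\psi_2(g)^{-1}\in Z(G,\cdot)$ for every $g\in G$.
   Context: $\operatorname{Perm}(G)$ is the group of permutations of the set $G$. For $\psi\in\operatorname{End}(G,\cdot)$, $[g,\psi]=g\cdot\psi(g)^{-1}$ and $[G,\psi]$ is the subgroup generated by these elements. Commutators are $[x,y]=xyx^{-1}y^{-1}$ and $[A,B]$ is the subgroup generated by $[a,b]$, $a\in A$, $b\in B$. $Z(G,\cdot)$ is the centre. *)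

(* Defs.v *)
From Stdlib Require Import ZArith.
Set Implicit Arguments.

Section GroupDefs.
Variable G : Type.
Variable mul : G -> G -> G.
Variable one : G.
Variable inv : G -> G.

Definition is_group : Prop :=
  (forall x y z, mul x (mul y z) = mul (mul x y) z) /\
  (forall x, mul one x = x) /\ (forall x, mul x one = x) /\
  (forall x, mul (inv x) x = one) /\ (forall x, mul x (inv x) = one).

Definition is_endo (psi : G -> G) : Prop :=
  forall x y, psi (mul x y) = mul (psi x) (psi y).

Definition is_subgroup (H : G -> Prop) : Prop :=
  H one /\ (forall x y, H x -> H y -> H (mul x y)) /\ (forall x, H x -> H (inv x)).

Definition gen (S : G -> Prop) : G -> Prop :=
  fun x => forall H, is_subgroup H -> (forall s, S s -> H s) -> H x.

Definition center : G -> Prop := fun z => forall y, mul z y = mul y z.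

Definition comm (x y : G) : G := mul (mul (mul x y) (inv x)) (inv y).

Definition comm_sub (A B : G -> Prop) : G -> Prop :=
  gen (fun x => exists a b, A a /\ B b /\ x = comm a b).

Definition setT : G -> Prop := fun _ => True.

Definition G_psi (psi : G -> G) : G -> Prop :=
  gen (fun x => exists g, x = mul g (inv (psi g))).

Definition image (psi : G -> G) (A : G -> Prop) : G -> Prop :=
  fun x => exists a, A a /\ x = psi a.

Definition image_in_center (psi : G -> G) (A : G -> Prop) : Prop :=
  forall a, A a -> center (psi a).

Definition cond_minus (psi : G -> G) : Prop :=
  image_in_center psi (comm_sub (G_psi psi) setT).

Definition cond_plus (psi : G -> G) : Prop :=
  image_in_center psi (comm_sub (image psi setT) setT).

Definition epow (eps : Z) (x : G) : G := if Z.eqb eps 1 then x else inv x.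

Definition Nset (eps : Z) (psi : G -> G) : (G -> G) -> Prop :=
  fun f => exists g, f = (fun h => mul (mul (mul g (epow eps (psi g))) h)
                                     (inv (epow eps (psi g)))).
End GroupDefs.

(* Main.v *)
Require Import Defs.
From Stdlib Require Import ZArith FunctionalExtensionality.
Set Implicit Arguments.

Section S.
Variable G : Type.
Variable mul : G -> G -> G.
Variable one : G.
Variable inv : G -> G.
Hypothesis HG : is_group mul one inv.

Let assoc : forall x y z, mul x (mul y z) = mul (mul x y) z.
Proof. apply HG. Qed.
Let lid : forall x, mul one x = x. Proof. apply HG. Qed.
Let rid : forall x, mul x one = x. Proof. apply HG. Qed.
Let linv : forall x, mul (inv x) x = one. Proof. apply HG. Qed.
Let rinv : forall x, mul x (inv x) = one. Proof. apply HG. Qed.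

Lemma cancelL : forall a x y, mul a x = mul a y -> x = y.
Proof.
  intros a x y H.
  rewrite <- (lid x), <- (lid y), <- (linv a), <- !assoc, H. reflexivity.
Qed.

Lemma conj_iff : forall a1 a2,
  (forall h, mul (mul a1 h) (inv a1) = mul (mul a2 h) (inv a2)) <->
  center mul (mul (inv a2) a1).
Proof.
  intros a1 a2; split.
  - intros H y.
    transitivity (mul (inv a2) (mul (mul (mul a1 y) (inv a1)) a1)).
    + rewrite <- (assoc (mul a1 y)), linv, rid, assoc. reflexivity.
    + rewrite H, <- !assoc, (assoc (inv a2) a2), linv, lid. reflexivity.
  - intros H h.
    transitivity (mul (mul (mul a2 (mul (inv a2) a1)) h) (inv a1)).
    + rewrite (assoc a2), rinv, lid. reflexivity.
    + rewrite <- (assoc a2), H, !assoc.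
      rewrite <- (assoc _ a1), rinv, rid. reflexivity.
Qed.

Lemma center_swap : forall x y,
  center mul (mul (inv y) x) <-> center mul (mul x (inv y)).
Proof.
  intros x y; split; intros H z.
  - assert (E : mul x (inv y) = mul (mul y (mul (inv y) x)) (inv y)).
    { rewrite (assoc y), rinv, lid. reflexivity. }
    assert (E2 : mul (mul y (mul (inv y) x)) (inv y) = mul (inv y) x).
    { rewrite <- assoc, (H (inv y)), assoc, rinv, lid. reflexivity. }
    rewrite E, E2. apply H.
  - assert (E : mul (inv y) x = mul (mul (inv y) (mul x (inv y))) y).
    { rewrite <- !assoc, linv, rid. reflexivity. }
    assert (E2 : mul (mul (inv y) (mul x (inv y))) y = mul x (inv y)).
    { rewrite <- assoc, (H y), assoc, linv, lid. reflexivity. }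
    rewrite E, E2. apply H.
Qed.

Lemma center_inv : forall z, center mul z -> center mul (inv z).
Proof.
  intros z H y.
  apply (cancelL (a:=z)).
  rewrite assoc, rinv, lid, assoc, H, <- assoc, rinv, rid. reflexivity.
Qed.

Lemma inv_inv : forall z, inv (inv z) = z.
Proof. intros z. apply (cancelL (a:=inv z)). rewrite rinv, linv. reflexivity. Qed.

Lemma inv_mul_inv : forall x y, mul (inv (inv y)) (inv x) = inv (mul x (inv y)).
Proof.
  intros x y. apply (cancelL (a:=mul x (inv y))).
  rewrite rinv, <- assoc, (assoc (inv y)), rinv, lid, rinv. reflexivity.
Qed.

End S.

Theorem mainTheorem3 (G : Type) (mul : G -> G -> G) (one : G) (inv : G -> G)
  (HG : is_group mul one inv) (eps : Z) (psi1 psi2 : G -> G)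
  (Hpsi1 : is_endo mul psi1) (Hpsi2 : is_endo mul psi2)
  (Hcond : (eps = (-1)%Z /\ cond_minus mul one inv psi1 /\ cond_minus mul one inv psi2) \/
           (eps = 1%Z /\ cond_plus mul one inv psi1 /\ cond_plus mul one inv psi2)) :
  (forall f : G -> G, Nset mul inv eps psi1 f <-> Nset mul inv eps psi2 f) <->
  (forall g : G, center mul (mul (psi1 g) (inv (psi2 g)))).
Proof.
  clear Hcond Hpsi1 Hpsi2.
  assert (key : forall g, center mul (mul (inv (epow inv eps (psi2 g))) (epow inv eps (psi1 g)))
                 <-> center mul (mul (psi1 g) (inv (psi2 g)))).
  { intros g. unfold epow. destruct (Z.eqb eps 1).
    - exact (center_swap HG _ _).
    - rewrite (inv_mul_inv HG). split.
      + intros H. pose proof (center_inv HG H) as H'.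
        rewrite (inv_inv HG) in H'. exact H'.
      + intros H. apply (center_inv HG). exact H. }
  pose proof HG as (assoc & lid & rid & linv & rinv).
  split.
  - intros HN g. apply key. apply (conj_iff HG). intros h.
    assert (H1 : Nset mul inv eps psi1 (fun h => mul (mul (mul g (epow inv eps (psi1 g))) h)
                                     (inv (epow inv eps (psi1 g))))) by (exists g; reflexivity).
    apply HN in H1. destruct H1 as [g' Hg'].
    pose proof (equal_f Hg' one) as E1. cbv beta in E1.
    rewrite !rid, <- !assoc, !rinv, !rid in E1. subst g'.
    pose proof (equal_f Hg' h) as E. cbv beta in E.
    rewrite <- !assoc in E. apply (cancelL HG) in E. rewrite !assoc in E. exact E.
  - intros HC f. unfold Nset.
    assert (Eq : forall g, (fun h => mul (mul (mul g (epow inv eps (psi1 g))) h) (inv (epow inv eps (psi1 g))))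
                         = (fun h => mul (mul (mul g (epow inv eps (psi2 g))) h) (inv (epow inv eps (psi2 g))))).
    { intros g. apply functional_extensionality. intros h.
      pose proof (proj2 (conj_iff HG _ _) (proj2 (key g) (HC g)) h) as E.
      rewrite <- !assoc in E. rewrite <- !assoc, E. reflexivity. }
    split; intros [g Hg]; exists g; rewrite Hg; [|symmetry]; apply Eq.
Qed.
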